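(* Let $(B,\cdot)$ be an algebra over a field $\mathbb K$ of characteristic $0$ which is $\rho$-associative, i.e. $(b_1 b_2) b_3 - b_3 (b_1 b_2)=0$ for all $b_1,b_2,b_3\in B$. Then the bracket $[x,y]=xy-yx$ makes $B$ an Acaa-algebra, and $(B,[\cdot,\cdot])$ is also a $2$-step nilpotent Lie algebra (i.e. $[[x,y],z]=0$ for all $x,y,z\in B$).
   Context: An Acaa-algebra over a field $\mathbb K$ of characteristic $0$ is a $\mathbb K$-vector space $A$ with a bilinear product $[\cdot,\cdot]$ which is anticommutative, $[x,y]=-[y,x]$, and satisfies $[x_1,[x_2,x_3]]=[x_2,[x_3,x_1]]$ for all $x_1,x_2,x_3\in A$. An algebra here is a vector space with a bilinear (not necessarily associative) product. *)

(* Defs.v *)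
From HB Require Import structures.
From mathcomp Require Import all_boot all_order all_algebra.
Set Implicit Arguments. Unset Strict Implicit. Unset Printing Implicit Defensive.
Import GRing.Theory.
Local Open Scope ring_scope.

Definition bilinear_prod (K : fieldType) (B : lmodType K) (p : B -> B -> B) :=
  (forall a x y z, p (a *: x + y) z = a *: p x z + p y z) /\
  (forall a x y z, p x (a *: y + z) = a *: p x y + p x z).

Definition rho_associative (K : fieldType) (B : lmodType K) (p : B -> B -> B) :=
  forall b1 b2 b3, p (p b1 b2) b3 - p b3 (p b1 b2) = 0.

Definition commutator (K : fieldType) (B : lmodType K) (p : B -> B -> B) :=
  fun x y => p x y - p y x.

Definition acaa_algebra (K : fieldType) (B : lmodType K) (br : B -> B -> B) :=
  [/\ bilinear_prod br,
      (forall x y, br x y = - br y x) &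
      (forall x1 x2 x3, br x1 (br x2 x3) = br x2 (br x3 x1))].

Definition lie_algebra (K : fieldType) (B : lmodType K) (br : B -> B -> B) :=
  [/\ bilinear_prod br,
      (forall x y, br x y = - br y x) &
      (forall x y z, br x (br y z) + br y (br z x) + br z (br x y) = 0)].

Definition two_step_nilpotent_lie (K : fieldType) (B : lmodType K)
  (br : B -> B -> B) :=
  lie_algebra br /\ (forall x y z, br (br x y) z = 0).

(* Main.v *)
Require Import Defs.
From mathcomp Require Import all_boot all_order all_algebra.
Local Open Scope ring_scope.
Import GRing.Theory.

Theorem mainTheorem9 (K : fieldType) (charK0 : [pchar K] =i pred0)
  (B : lmodType K) (mul : B -> B -> B)
  (mul_bilin : bilinear_prod mul) (mul_rho : rho_associative mul) :
  acaa_algebra (commutator mul) /\ two_step_nilpotent_lie (commutator mul).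
Proof.
case: mul_bilin => [Hl Hr].
have nil : forall x y z, commutator mul (commutator mul x y) z = 0.
  move=> x y z; rewrite /commutator.
  have L0 : forall z, mul 0 z = 0.
    move=> w; have := Hl 1 0 0 w; rewrite !scale1r addr0 => E.
    by apply: (addrI (mul 0 w)); rewrite addr0 -E.
  have LN : forall u v w, mul (u - v) w = mul u w - mul v w.
    move=> u v w; have := Hl (-1) v u w.
    by rewrite !scaleN1r => E; rewrite addrC E addrC.
  have R0 : forall z, mul z 0 = 0.
    move=> w; have := Hr 1 w 0 0; rewrite !scale1r addr0 => E.
    by apply: (addrI (mul w 0)); rewrite addr0 -E.
  have RN : forall u v w, mul w (u - v) = mul w u - mul w v.
    move=> u v w; have := Hr (-1) w v u.
    by rewrite !scaleN1r => E; rewrite addrC E addrC.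
  rewrite LN RN.
  have e1 : mul (mul x y) z = mul z (mul x y) by apply/eqP; rewrite -subr_eq0 mul_rho.
  have e2 : mul (mul y x) z = mul z (mul y x) by apply/eqP; rewrite -subr_eq0 mul_rho.
  by rewrite e1 e2 subrr.
have bil : bilinear_prod (commutator mul).
  rewrite /commutator; split => a x y z.
    rewrite Hl Hr scalerBr.
    by rewrite opprD addrACA.
  rewrite Hl Hr scalerBr.
  by rewrite opprD addrACA.
have anti : forall x y, commutator mul x y = - commutator mul y x.
  by move=> x y; rewrite /commutator opprB.
have z3 : forall x y z, commutator mul x (commutator mul y z) = 0.
  by move=> x y z; rewrite anti nil oppr0.
split; first by split => // x1 x2 x3; rewrite !z3.
split=> //; split => // x y z; by rewrite !z3 !addr0.
Qed.
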